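(* Let $G$ be a group of finite rank and $T$ a finite normal subgroup of $G$, and put $Q=G/T$. Then $\alpha_G^*=\alpha_Q^*$ for $*\in\{\leq,\lhd\}$, and $\zeta_{G,p}^*(s)=\zeta_{Q,p}^*(s)$ for every prime $p$ not dividing $|T|$.
   Context: $a_n^{\leq}(G)$ (resp. $a_n^{\lhd}(G)$) is the number of subgroups (resp. normal subgroups) of index $n$ in $G$; $\alpha_G^*:=\inf\{\alpha:\exists c>0\ \forall n\ \sum_{i\le n}a_i^*(G)\le cn^{\alpha}\}$; the local factor at a prime $p$ is $\zeta_{G,p}^*(s)=\sum_{k\ge0}a_{p^k}^*(G)p^{-ks}$. *)

(* Defs.v *)
From Stdlib Require Import Reals List Arith ZArith Znumtheory ClassicalEpsilon.
From Coquelicot Require Import Coquelicot.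

Record group := Group {
  carrier :> Type;
  gmul : carrier -> carrier -> carrier;
  gone : carrier;
  ginv : carrier -> carrier;
  gmulA : forall x y z, gmul x (gmul y z) = gmul (gmul x y) z;
  gmul1 : forall x, gmul gone x = x;
  gmulV : forall x, gmul (ginv x) x = gone
}.

Section GroupDefs.
Variable G : group.

Definition subgroup (H : G -> Prop) : Prop :=
  H (gone G) /\ (forall x y, H x -> H y -> H (gmul G x y)) /\
  (forall x, H x -> H (ginv G x)).

Definition normal_subgroup (H : G -> Prop) : Prop :=
  subgroup H /\ forall g x, H x -> H (gmul G (ginv G g) (gmul G x g)).

Definition has_index (H : G -> Prop) (n : nat) : Prop :=
  exists r : nat -> G,
    (forall x, exists i, (i < n)%nat /\ H (gmul G (ginv G (r i)) x)) /\
    (forall i j, (i < n)%nat -> (j < n)%nat ->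
       H (gmul G (ginv G (r i)) (r j)) -> i = j).

Definition generated (S : G -> Prop) (x : G) : Prop :=
  forall H, subgroup H -> (forall s, S s -> H s) -> H x.

Definition gen_by_list (H : G -> Prop) (l : list G) : Prop :=
  forall x, H x <-> generated (fun y => In y l) x.

Definition finitely_generated (H : G -> Prop) : Prop :=
  exists l, gen_by_list H l.

Definition finite_rank : Prop :=
  exists r : nat, forall H, subgroup H -> finitely_generated H ->
    exists l, (length l <= r)%nat /\ gen_by_list H l.

End GroupDefs.

Definition has_card {A : Type} (P : A -> Prop) (m : nat) : Prop :=
  exists l : list A, NoDup l /\ length l = m /\ (forall x, P x <-> In x l).

(** Number of elements of P (meaningful when P is finite). *)
Definition card_of {A : Type} (P : A -> Prop) : nat :=
  epsilon (inhabits 0%nat) (fun m => has_card P m).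

Inductive kind := Sub | Nor.

Definition subgroup_kind (k : kind) (G : group) (H : G -> Prop) : Prop :=
  match k with Sub => subgroup G H | Nor => normal_subgroup G H end.

Definition a_count (k : kind) (G : group) (n : nat) : nat :=
  card_of (fun H : G -> Prop => subgroup_kind k G H /\ has_index G H n).

Definition partial_count (k : kind) (G : group) (n : nat) : nat :=
  fold_right Nat.add 0%nat (map (a_count k G) (seq 1 n)).

Definition alpha (k : kind) (G : group) : Rbar :=
  Glb_Rbar (fun a : R => exists c : R, 0 < c /\
     forall n : nat, (1 <= n)%nat ->
       INR (partial_count k G n) <= c * Rpower (INR n) a).

(** Local factor zeta^*_{G,p}(s) = sum_k a^*_{p^k}(G) p^{-ks}, as a formal
    power series in p^{-s}, i.e. its coefficient sequence. *)
Definition local_zeta (k : kind) (G : group) (p : nat) : nat -> nat :=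
  fun e => a_count k G (p ^ e).

Definition group_hom (G Q : group) (f : G -> Q) : Prop :=
  forall x y, f (gmul G x y) = gmul Q (f x) (f y).

(* Main.v *)
Require Import Defs.
From Stdlib Require Import Reals List Arith ZArith Znumtheory.
From Coquelicot Require Import Coquelicot.
From Stdlib Require Import Lia ClassicalEpsilon FunctionalExtensionality PropExtensionality Classical.

Declare Scope grp_scope.
Local Infix "**" := (gmul _) (at level 40, left associativity) : grp_scope.
Local Notation iv := (ginv _).
Local Notation e := (gone _).
Local Open Scope grp_scope.

Lemma pred_ext {A : Type} (P Q : A -> Prop) : (forall x, P x <-> Q x) -> P = Q.
Proof. intro h; apply functional_extensionality; intro x; apply propositional_extensionality; auto. Qed.

Lemma NoDup_map_inj_in {A B} (f : A -> B) (l : list A) :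
  NoDup l -> (forall x y, In x l -> In y l -> f x = f y -> x = y) -> NoDup (map f l).
Proof.
  induction l as [|a l IH]; intros hn hi; simpl; constructor.
  - intro hin. apply in_map_iff in hin as [y [hy1 hy2]].
    inversion hn; subst. assert (y = a) by (apply hi; simpl; auto). subst; contradiction.
  - inversion hn; subst. apply IH; auto. intros; apply hi; simpl; auto.
Qed.

Lemma has_card_unique {A} (P : A -> Prop) m m' : has_card P m -> has_card P m' -> m = m'.
Proof.
  intros [l [h1 [h2 h3]]] [l' [h1' [h2' h3']]]; subst.
  apply Nat.le_antisymm; apply NoDup_incl_length; auto; intros x hx.
  - apply h3', h3, hx.
  - apply h3, h3', hx.
Qed.

Lemma card_of_spec {A} (P : A -> Prop) m : has_card P m -> card_of P = m.
Proof.
  intro h. unfold card_of.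
  apply has_card_unique with P; auto.
  apply epsilon_spec. eauto.
Qed.

Lemma max_nat (P : nat -> Prop) b : P 0%nat -> (forall m, P m -> (m <= b)%nat) ->
  exists m, P m /\ forall m', P m' -> (m' <= m)%nat.
Proof.
  intros h0 hb.
  assert (forall k m0, P m0 -> (b - m0 <= k)%nat -> exists m, P m /\ forall m', P m' -> (m' <= m)%nat).
  { induction k; intros m0 hm0 hk.
    - exists m0; split; auto. intros m' hm'. destruct (le_gt_dec m' m0); auto.
      specialize (hb m' hm'). lia.
    - destruct (classic (exists m', P m' /\ (m' > m0)%nat)) as [[m' [hm' hgt]]|hn].
      + apply (IHk m' hm'). specialize (hb m' hm'). lia.
      + exists m0; split; auto. intros m' hm'. destruct (le_gt_dec m' m0); auto.
        exfalso; apply hn; eauto. }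
  apply (H b 0%nat h0). lia.
Qed.

Definition bounded {A} (P : A -> Prop) (b : nat) :=
  forall l, NoDup l -> (forall x, In x l -> P x) -> (length l <= b)%nat.

Lemma bounded_card {A} (P : A -> Prop) b : bounded P b -> exists m, has_card P m /\ (m <= b)%nat.
Proof.
  intro hb.
  destruct (max_nat (fun m => exists l, NoDup l /\ (forall x, In x l -> P x) /\ length l = m) b)
    as [m [[l [h1 [h2 h3]]] hmax]].
  - exists nil; split; [constructor|split; [intros x []|reflexivity]].
  - intros m [l [h1 [h2 h3]]]; subst; apply hb; auto.
  - exists m; split.
    + exists l; split; [auto|split; [auto|]]. intro x; split; [|auto]. intro hx.
      destruct (classic (In x l)) as [hi|hi]; auto.
      exfalso. assert (S m <= m)%nat; [|lia].
      apply hmax. exists (x :: l); split; [constructor; auto|split].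
      * intros y [<-|hy]; auto.
      * simpl; lia.
    + subst; apply hb; auto.
Qed.

Lemma bounded_inj {A B} (P : A -> Prop) (P' : B -> Prop) (f : A -> B) b :
  bounded P' b -> (forall x, P x -> P' (f x)) -> (forall x y, P x -> P y -> f x = f y -> x = y) ->
  bounded P b.
Proof.
  intros hb hf hi l hn hl. rewrite <- (length_map f). apply hb.
  - apply NoDup_map_inj_in; auto.
  - intros y hy. apply in_map_iff in hy as [x [<- hx]]; auto.
Qed.

Lemma card_le_inj {A B} (P : A -> Prop) (P' : B -> Prop) (f : A -> B) m m' :
  has_card P m -> has_card P' m' -> (forall x, P x -> P' (f x)) ->
  (forall x y, P x -> P y -> f x = f y -> x = y) -> (m <= m')%nat.
Proof.
  intros [l [h1 [h2 h3]]] [l' [h1' [h2' h3']]] hf hi; subst.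
  rewrite <- (length_map f l). apply NoDup_incl_length.
  - apply NoDup_map_inj_in; auto. intros x y hx hy; apply hi; apply h3; auto.
  - intros y hy. apply in_map_iff in hy as [x [<- hx]]. apply h3', hf, h3, hx.
Qed.

Lemma fiber_count {A B} (f : A -> B) (L : list A) (M : list B) (b : nat) :
  NoDup L -> (forall x, In x L -> In (f x) M) ->
  (forall y l', NoDup l' -> (forall x, In x l' -> In x L /\ f x = y) -> (length l' <= b)%nat) ->
  (length L <= b * length M)%nat.
Proof.
  revert L. induction M as [|y M IH]; intros L hn hin hf.
  - destruct L as [|x L]; [simpl; lia|]. exfalso; apply (hin x); simpl; auto.
  - set (p := fun x => if excluded_middle_informative (f x = y) then true else false).
    rewrite <- (filter_length p L).
    assert (length (filter p L) <= b)%nat.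
    { apply (hf y). apply NoDup_filter; auto.
      intros x hx. apply filter_In in hx as [h1 h2]. split; auto.
      unfold p in h2. destruct excluded_middle_informative; auto; discriminate. }
    assert (length (filter (fun x => negb (p x)) L) <= b * length M)%nat.
    { apply IH. apply NoDup_filter; auto.
      - intros x hx. apply filter_In in hx as [h1 h2]. unfold p in h2.
        destruct excluded_middle_informative; try discriminate.
        destruct (hin x h1); auto. congruence.
      - intros y' l' h1 h2. apply (hf y'); auto. intros x hx. destruct (h2 x hx) as [h3 h4].
        apply filter_In in h3 as [h5 _]; auto. }
    simpl. lia.
Qed.

Lemma union_list {A} (P : nat -> A -> Prop) (a : nat -> nat) (I : list nat) :
  NoDup I -> (forall i, In i I -> has_card (P i) (a i)) ->
  (forall i j x, In i I -> In j I -> P i x -> P j x -> i = j) ->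
  exists L, NoDup L /\ length L = fold_right Nat.add 0%nat (map a I) /\
    forall x, In x L <-> exists i, In i I /\ P i x.
Proof.
  induction I as [|i I IH]; intros hn hc hd.
  - exists nil; split; [constructor|split; [reflexivity|]]. intro x; simpl; split; [intros []|intros [i [[] _]]].
  - inversion hn; subst.
    destruct IH as [L [h1 [h2 h3]]]; auto.
    { intros; apply hc; simpl; auto. }
    { intros; eapply hd; simpl; eauto. }
    destruct (hc i (or_introl eq_refl)) as [l [g1 [g2 g3]]].
    exists (l ++ L); repeat split.
    + apply NoDup_app; auto. intros x hx hx'.
      apply h3 in hx' as [j [hj1 hj2]]. apply g3 in hx.
      assert (i = j) by (eapply hd; simpl; eauto). subst; contradiction.
    + rewrite length_app; simpl; lia.
    + intro hx. apply in_app_or in hx as [hx|hx].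
      * exists i; split; simpl; auto; apply g3; auto.
      * apply h3 in hx as [j [? ?]]; exists j; simpl; auto.
    + intros [j [[<-|hj] hp]]; apply in_or_app; [left; apply g3; auto | right; apply h3; eauto].
Qed.

Fixpoint blists (n : nat) : list (list bool) :=
  match n with O => nil :: nil | S n => map (cons true) (blists n) ++ map (cons false) (blists n) end.

Lemma blists_length n : length (blists n) = (2 ^ n)%nat.
Proof. induction n; simpl; auto. rewrite length_app, !length_map, IHn. lia. Qed.

Lemma blists_in n l : length l = n -> In l (blists n).
Proof.
  revert l; induction n; intros l hl.
  - destruct l; simpl in *; auto; discriminate.
  - destruct l as [|b l]; simpl in *; try discriminate. apply in_or_app.
    destruct b; [left|right]; apply in_map; apply IHn; lia.
Qed.

Lemma NoDup_prod {A B} (l : list A) (l' : list B) : NoDup l -> NoDup l' -> NoDup (list_prod l l').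
Proof.
  induction l as [|a l IH]; intros h h'; simpl; [constructor|].
  inversion h; subst. apply NoDup_app; auto.
  - apply NoDup_map_inj_in; auto. intros x y _ _ e; inversion e; auto.
  - intros [x y] hx hy. apply in_map_iff in hx as [z [e _]]. inversion e; subst.
    apply in_prod_iff in hy as [? _]; contradiction.
Qed.


Section GL.
Variable G : group.
Implicit Types x y z : G.

Lemma mulKV x y : iv x ** (x ** y) = y.
Proof. rewrite gmulA, gmulV, gmul1; auto. Qed.
Lemma mulrV x : x ** iv x = e.
Proof.
  transitivity (iv (iv x) ** iv x ** (x ** iv x)).
  - rewrite (gmulV _ (iv x)), gmul1; auto.
  - rewrite <- gmulA, (mulKV x (iv x)), gmulV. auto.
Qed.
Lemma mulr1 x : x ** e = x.
Proof. rewrite <- (gmulV _ x), gmulA, mulrV, gmul1; auto. Qed.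
Lemma mulK x y : x ** (iv x ** y) = y.
Proof. rewrite gmulA, mulrV, gmul1; auto. Qed.
Lemma inv_uniq x y : x ** y = e -> x = iv y.
Proof. intro h. rewrite <- (mulr1 x), <- (mulrV y), gmulA, h, gmul1; auto. Qed.
Lemma invinv x : iv (iv x) = x.
Proof. symmetry; apply inv_uniq, mulrV. Qed.
Lemma inv_mul x y : iv (x ** y) = iv y ** iv x.
Proof. symmetry; apply inv_uniq. rewrite <- gmulA, (gmulA _ (iv x)), gmulV, gmul1, gmulV; auto. Qed.
Lemma inv1 : iv (gone G) = e.
Proof. symmetry; apply inv_uniq, gmul1. Qed.
Lemma mulA' x y z : x ** y ** z = x ** (y ** z).
Proof. symmetry; apply gmulA. Qed.
Lemma mulV_tail x : iv x ** x = e.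
Proof. apply gmulV. Qed.
End GL.

Global Hint Rewrite inv_mul invinv inv1 mulA' gmulV mulrV mulKV mulK gmul1 mulr1 : grp.
Ltac gsimpl := autorewrite with grp.

Section Reps.
Variable G : group.
Implicit Types x y z a b : G.

Lemma sg1 H : subgroup G H -> H e.
Proof. intros [h _]; auto. Qed.
Lemma sgM H x y : subgroup G H -> H x -> H y -> H (x ** y).
Proof. intros [_ [h _]]; auto. Qed.
Lemma sgV H x : subgroup G H -> H x -> H (iv x).
Proof. intros [_ [_ h]]; auto. Qed.
Lemma sgV' H x : subgroup G H -> H (iv x) -> H x.
Proof. intros hs h. rewrite <- invinv. apply sgV; auto. Qed.
Lemma sg_eq H x y : x = y -> H x -> H y.
Proof. intros ->; auto. Qed.

Definition cov (L H : G -> Prop) (R : list G) :=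
  forall x, L x -> exists a, In a R /\ H (iv a ** x).
Definition reps (L H : G -> Prop) (R : list G) :=
  NoDup R /\ (forall a, In a R -> L a) /\ cov L H R /\
  (forall a b, In a R -> In b R -> H (iv a ** b) -> a = b).

Lemma has_index_reps H n : subgroup G H ->
  (has_index G H n <-> exists R, reps (fun _ => True) H R /\ length R = n).
Proof.
  intro hH; split.
  - intros [r [hc hd]]. exists (map r (seq 0 n)). split; [|rewrite length_map, length_seq; auto].
    split; [|split; [auto|split]].
    + apply NoDup_map_inj_in; [apply seq_NoDup|]. intros i j hi hj hr.
      apply in_seq in hi; apply in_seq in hj. apply hd; try lia.
      rewrite hr. gsimpl. apply sg1; auto.
    + intros x _. destruct (hc x) as [i [hi hx]]. exists (r i); split; auto.
      apply in_map, in_seq; lia.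
    + intros a b ha hb hab. apply in_map_iff in ha as [i [<- hi]].
      apply in_map_iff in hb as [j [<- hj]]. apply in_seq in hi; apply in_seq in hj.
      f_equal. apply hd; auto; lia.
  - intros [R [[hn [_ [hc hd]]] hl]]. exists (fun i => nth i R e). split.
    + intros x. destruct (hc x I) as [a [ha hx]].
      destruct (In_nth R a e ha) as [i [hi hia]]. exists i; split; [lia|]. rewrite hia; auto.
    + intros i j hi hj hij. apply (proj1 (NoDup_nth R e) hn); try lia.
      apply hd; auto; apply nth_In; lia.
Qed.

Lemma reps_unique L H R1 R2 : subgroup G H -> reps L H R1 -> reps L H R2 ->
  (length R1 <= length R2)%nat.
Proof.
  intros hH [n1 [l1 [c1 d1]]] [n2 [l2 [c2 d2]]].
  set (phi := fun a => epsilon (inhabits e) (fun b => In b R2 /\ H (iv b ** a))).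
  assert (hphi : forall a, In a R1 -> In (phi a) R2 /\ H (iv (phi a) ** a)).
  { intros a ha. apply epsilon_spec. apply c2, l1, ha. }
  rewrite <- (length_map phi R1). apply NoDup_incl_length.
  - apply NoDup_map_inj_in; auto. intros a a' ha ha' he.
    apply d1; auto. destruct (hphi a ha) as [_ h1]. destruct (hphi a' ha') as [_ h2].
    rewrite he in h1. apply (sg_eq H (iv (iv (phi a') ** a) ** (iv (phi a') ** a'))).
    + gsimpl; auto.
    + apply sgM; auto. apply sgV; auto.
  - intros b hb. apply in_map_iff in hb as [a [<- ha]]. apply hphi; auto.
Qed.

Lemma reps_length L H R1 R2 : subgroup G H -> reps L H R1 -> reps L H R2 ->
  length R1 = length R2.
Proof. intros; apply Nat.le_antisymm; eapply reps_unique; eauto. Qed.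

Lemma reps_exists_aux H (hH : subgroup G H) (R : list G) :
  exists R', NoDup R' /\ incl R' R /\ (length R' <= length R)%nat /\
     (forall a b, In a R' -> In b R' -> H (iv a ** b) -> a = b) /\
     (forall a, In a R -> exists b, In b R' /\ H (iv b ** a)).
Proof.
  induction R as [|a R IH].
  - exists nil; split; [apply NoDup_nil|]; split; [intros ? []|]; split; [simpl; lia|]; split.
    + intros ? ? [].
    + intros ? [].
  - destruct IH as [R' [h1 [h2 [h3 [h4 h5]]]]].
    destruct (classic (exists b, In b R' /\ H (iv b ** a))) as [hx|hx].
    + exists R'; split; [auto|split; [|split; [|split]]]; auto.
      * intros x hxR; right; auto.
      * simpl; lia.
      * intros x [<-|hxr]; auto.
    + exists (a :: R'); split; [|split; [|split; [|split]]].
      * apply NoDup_cons; [|auto]. intro ha. apply hx. exists a; split; [auto|]. gsimpl; apply sg1; auto.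
      * intros x [<-|hxr]; simpl; auto.
      * simpl; lia.
      * intros x y [<-|hxr] [<-|hyr] hxy; auto.
        -- exfalso; apply hx. exists y; split; auto.
           apply (sg_eq H (iv (iv a ** y))); [gsimpl; auto|]. apply sgV; auto.
        -- exfalso; apply hx. exists x; split; auto.
      * intros x [<-|hxr].
        -- exists a; split; simpl; auto. gsimpl; apply sg1; auto.
        -- destruct (h5 x hxr) as [b [? ?]]; exists b; simpl; auto.
Qed.

Lemma reps_exists L H R : subgroup G H -> cov L H R -> (forall a, In a R -> L a) ->
  exists R', reps L H R' /\ (length R' <= length R)%nat /\ incl R' R.
Proof.
  intros hH hc hL. destruct (reps_exists_aux H hH R) as [R' [h1 [h2 [h3 [h4 h5]]]]].
  exists R'; split; [|split]; auto. split; [auto|split; [|split]]; auto.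
  intros x hx. destruct (hc x hx) as [a [ha hax]]. destruct (h5 a ha) as [b [hb hba]].
  exists b; split; auto. apply (sg_eq H ((iv b ** a) ** (iv a ** x))); [gsimpl; auto|].
  apply sgM; auto.
Qed.

Lemma reps_mul L K H S U : subgroup G L -> subgroup G K -> subgroup G H ->
  (forall x, H x -> K x) -> (forall x, K x -> L x) ->
  reps L K S -> reps K H U ->
  reps L H (map (fun p => fst p ** snd p) (list_prod S U)).
Proof.
  intros hL hK hH hHK hKL [n1 [l1 [c1 d1]]] [n2 [l2 [c2 d2]]].
  assert (key : forall s u s' u', In s S -> In u U -> In s' S -> In u' U ->
     H (iv (s ** u) ** (s' ** u')) -> s = s' /\ u = u').
  { intros s u s' u' hs hu hs' hu' h.
    assert (s = s').
    { apply d1; auto. apply (sg_eq K (u ** (iv (s ** u) ** (s' ** u')) ** iv u')); [gsimpl; auto|].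
      apply sgM; [auto| |apply sgV; auto]. apply sgM; auto. }
    subst; split; auto. apply d2; auto. revert h; apply sg_eq; gsimpl; auto. }
  split; [|split; [|split]].
  - apply NoDup_map_inj_in; [apply NoDup_prod; auto|].
    intros [s u] [s' u'] h1 h2 he. simpl in he.
    apply in_prod_iff in h1 as [hs hu]; apply in_prod_iff in h2 as [hs' hu'].
    destruct (key s u s' u'); auto; [|subst; auto]. rewrite he. gsimpl. apply sg1; auto.
  - intros a ha. apply in_map_iff in ha as [[s u] [<- hp]]. apply in_prod_iff in hp as [hs hu].
    simpl. apply sgM; auto.
  - intros x hx. destruct (c1 x hx) as [s [hs hsx]]. destruct (c2 _ hsx) as [u [hu hux]].
    exists (s ** u); split.
    + apply in_map_iff. exists (s, u); split; auto. apply in_prod_iff; auto.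
    + revert hux; apply sg_eq; gsimpl; auto.
  - intros a b ha hb hab. apply in_map_iff in ha as [[s u] [<- hp]]. apply in_prod_iff in hp as [hs hu].
    apply in_map_iff in hb as [[s' u'] [<- hp']]. apply in_prod_iff in hp' as [hs' hu'].
    simpl in *. destruct (key s u s' u'); auto. subst; auto.
Qed.

Lemma reps_mul_length S U : length (map (fun p : G * G => fst p ** snd p) (list_prod S U)) = (length S * length U)%nat.
Proof. rewrite length_map, length_prod; auto. Qed.

End Reps.


Section LemA.
Variable G : group.
Implicit Types x y z a b f g : G.

Lemma gen_subgroup (S : G -> Prop) : subgroup G (generated G S).
Proof.
  split; [|split].
  - intros H0 hH _. apply sg1; auto.
  - intros a b ha hb H0 hH hS. apply sgM; [auto|apply ha|apply hb]; auto.
  - intros u hu H0 hH hS. apply sgV; [auto|apply hu]; auto.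
Qed.
Lemma gen_base (S : G -> Prop) s : S s -> generated G S s.
Proof. intros hs H hH hS; auto. Qed.

Definition Mx (H : G -> Prop) (R : list G) g (i j : nat) : Prop :=
  H (iv (nth i (e :: R) e) ** (g ** nth j (e :: R) e)).

Definition good (K H : G -> Prop) (R : list G) (t : nat) :=
  subgroup G H /\ (forall x, H x -> K x) /\ cov G K H R /\ (forall a, In a R -> K a) /\ length R = t.

Lemma nthK K R j : subgroup G K -> (forall a, In a R -> K a) -> K (nth j (e :: R) e).
Proof.
  intros hK hR. destruct (le_lt_dec (length (e :: R)) j).
  - rewrite nth_overflow; auto. apply sg1; auto.
  - apply nth_In with (d := e) in l. destruct l as [<-|h]; auto. apply sg1; auto.
Qed.

Lemma M_mul K H R t f g i j : subgroup G K -> good K H R t -> K f -> K g ->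
  (Mx H R (f ** g) i j <-> exists k, (k < S t)%nat /\ Mx H R f i k /\ Mx H R g k j).
Proof.
  intros hK [hH [hHK [hc [hR hl]]]] hf hg. unfold Mx. split.
  - intro h. set (rj := nth j (e :: R) e). set (ri := nth i (e :: R) e) in *.
    assert (K (g ** rj)) by (apply sgM; auto; apply nthK; auto).
    destruct (hc _ H0) as [a [ha hax]].
    destruct (In_nth R a e ha) as [k [hk hka]].
    exists (S k); split; [lia|]. change (nth (S k) (e :: R) e) with (nth k R e). rewrite hka. split; auto.
    apply (sg_eq G H ((iv ri ** (f ** g ** rj)) ** iv (iv a ** (g ** rj)))); [gsimpl; auto|].
    apply sgM; auto. apply sgV; auto.
  - intros [k [hk [h1 h2]]].
    eapply sg_eq; [|apply (sgM G H _ _ hH h1 h2)]. gsimpl; auto.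
Qed.

Lemma M_inv H R f i j : subgroup G H -> (Mx H R (iv f) i j <-> Mx H R f j i).
Proof.
  intro hH; unfold Mx; split; intro h; apply sgV in h; auto; revert h; apply sg_eq; gsimpl; auto.
Qed.

Lemma M_00 H R f : Mx H R f 0 0 <-> H f.
Proof. unfold Mx; simpl; gsimpl; tauto. Qed.

Definition idx (gens : list G) (t : nat) := list_prod (e :: gens) (list_prod (seq 0 (S t)) (seq 0 (S t))).

Definition sigf (gens : list G) (t : nat) (H : G -> Prop) (R : list G) : list bool :=
  map (fun p => if excluded_middle_informative (Mx H R (fst p) (fst (snd p)) (snd (snd p))) then true else false)
    (idx gens t).

Lemma map_eq_in {A B} (f1 f2 : A -> B) l (w : A) : map f1 l = map f2 l -> In w l -> f1 w = f2 w.
Proof.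
  induction l; simpl; intros h hw; [contradiction|]. injection h; intros h1 h2.
  destruct hw as [<-|hw]; auto.
Qed.

Lemma sig_iff gens t H1 R1 H2 R2 g i j : sigf gens t H1 R1 = sigf gens t H2 R2 ->
  In g (e :: gens) -> (i < S t)%nat -> (j < S t)%nat -> (Mx H1 R1 g i j <-> Mx H2 R2 g i j).
Proof.
  intros h hg hi hj. eapply map_eq_in with (w := (g, (i, j))) in h.
  - simpl in h. do 2 destruct excluded_middle_informative; try discriminate; tauto.
  - apply in_prod_iff; split; auto. apply in_prod_iff; split; apply in_seq; lia.
Qed.

Lemma sig_claim K gens t H1 R1 H2 R2 : subgroup G K -> good K H1 R1 t -> good K H2 R2 t ->
  (forall g, In g gens -> K g) -> sigf gens t H1 R1 = sigf gens t H2 R2 ->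
  forall f, generated G (fun y => In y gens) f -> (H1 f <-> H2 f).
Proof.
  intros hK g1 g2 hg hs f hf.
  set (S := fun f => K f /\ forall i j, (i < S t)%nat -> (j < S t)%nat -> (Mx H1 R1 f i j <-> Mx H2 R2 f i j)).
  assert (hS : subgroup G S).
  { split; [|split].
    - split; [apply sg1; auto|]. intros; apply (sig_iff gens t); simpl; auto.
    - intros x y [hx1 hx2] [hy1 hy2]. split; [apply sgM; auto|]. intros i j hi hj.
      rewrite (M_mul K H1 R1 t), (M_mul K H2 R2 t); auto.
      split; intros [k [hk [ha hb]]]; exists k; split; auto; split;
        first [apply hx2 | apply hy2]; auto.
    - intros x [hx1 hx2]. split; [apply sgV; auto|]. intros i j hi hj.
      destruct g1 as [hH1 _]; destruct g2 as [hH2 _].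
      rewrite M_inv, M_inv; auto. }
  assert (S f). { apply hf; auto. intros s hs'. split; auto. intros; apply (sig_iff gens t); simpl; auto. }
  destruct H as [_ h]. specialize (h 0%nat 0%nat). rewrite !M_00 in h. apply h; lia.
Qed.

Lemma lemA (r : nat)
  (hr : forall H, subgroup G H -> finitely_generated G H ->
          exists l, (length l <= r)%nat /\ gen_by_list G H l)
  (K : G -> Prop) (hK : subgroup G K) (t : nat) (rho : (G -> Prop) -> list G)
  (l : list (G -> Prop)) :
  NoDup l -> (forall H, In H l -> good K H (rho H) t) ->
  (length l <= 2 ^ ((S r) * (S t * S t)))%nat.
Proof.
  intros hn hl.
  set (d := fun H1 H2 : G -> Prop => epsilon (inhabits e) (fun x => ~ (H1 x <-> H2 x))).
  set (dd := fun H1 H2 : G -> Prop => if excluded_middle_informative (K (d H1 H2)) then d H1 H2 else e).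
  set (D := map (fun p => dd (fst p) (snd p)) (list_prod l l)).
  assert (hDK : forall y, In y D -> K y).
  { intros y hy. apply in_map_iff in hy as [p [<- _]]. unfold dd.
    destruct excluded_middle_informative; auto. apply sg1; auto. }
  destruct (hr (generated G (fun y => In y D))) as [gens [hlen hgen]].
  { apply gen_subgroup. }
  { exists D. intro x; tauto. }
  assert (hgK : forall g, In g gens -> K g).
  { intros g hg. apply gen_base with (S := fun y => In y gens) in hg.
    apply (proj2 (hgen g)) in hg. apply hg; auto. }
  set (sg := fun H => sigf gens t H (rho H)).
  assert (hinj : forall H1 H2, In H1 l -> In H2 l -> sg H1 = sg H2 -> H1 = H2).
  { intros H1 H2 h1 h2 hs. destruct (classic (H1 = H2)) as [|hne]; auto. exfalso.
    assert (hex : exists x, ~ (H1 x <-> H2 x)).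
    { apply NNPP; intro hn'. apply hne, pred_ext. intro x. apply NNPP; intro; apply hn'; eauto. }
    assert (hd : ~ (H1 (d H1 H2) <-> H2 (d H1 H2))) by (apply (epsilon_spec (inhabits e) _ hex)).
    destruct (hl H1 h1) as [_ [k1 _]]. destruct (hl H2 h2) as [_ [k2 _]].
    assert (hKd : K (d H1 H2)).
    { destruct (classic (H1 (d H1 H2))); auto. destruct (classic (H2 (d H1 H2))); auto. tauto. }
    assert (hD : In (d H1 H2) D).
    { apply in_map_iff. exists (H1, H2); split; [|apply in_prod_iff; auto].
      simpl; unfold dd; destruct excluded_middle_informative; tauto. }
    apply hd. eapply (sig_claim K gens t); eauto.
    apply (proj1 (hgen _)). apply gen_base with (S := fun y => In y D). exact hD. }
  rewrite <- (length_map sg l).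
  eapply Nat.le_trans.
  - apply NoDup_incl_length with (l' := blists (length (idx gens t))).
    + apply NoDup_map_inj_in; auto.
    + intros s hs. apply in_map_iff in hs as [H [<- _]]. apply blists_in.
      unfold sg, sigf; rewrite length_map; auto.
  - rewrite blists_length. apply Nat.pow_le_mono_r; [lia|].
    unfold idx; rewrite !length_prod, !length_seq. simpl length. apply Nat.mul_le_mono_r. lia.
Qed.

End LemA.

Lemma nat_Z_divide a b : Nat.divide a b -> (Z.of_nat a | Z.of_nat b)%Z.
Proof. intros [z hz]. exists (Z.of_nat z). rewrite hz, Nat2Z.inj_mul. auto. Qed.

Lemma coprime_one (p t o e : nat) : prime (Z.of_nat p) -> ~ Nat.divide p t ->
  Nat.divide o (p ^ e) -> Nat.divide o t -> o = 1%nat.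
Proof.
  intros hp hpt ho1 ho2.
  pose proof (prime_ge_2 _ hp) as h2.
  assert (hr : rel_prime (Z.of_nat t) (Z.of_nat p)).
  { apply rel_prime_sym, prime_rel_prime; auto. intro hd. apply hpt.
    apply Nat.Lcm0.mod_divide. apply Nat2Z.inj. rewrite Nat2Z.inj_mod. simpl.
    apply Z.mod_divide; auto. lia. }
  assert (hr2 : rel_prime (Z.of_nat t) (Z.of_nat (p ^ e))).
  { clear ho1. induction e as [|e IH].
    - simpl. apply rel_prime_sym, rel_prime_1.
    - rewrite Nat.pow_succ_r', Nat2Z.inj_mul. apply rel_prime_mult; auto. }
  destruct hr2 as [_ _ hg]. specialize (hg (Z.of_nat o) (nat_Z_divide _ _ ho2) (nat_Z_divide _ _ ho1)).
  apply Z.divide_1_r in hg. lia.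
Qed.


Lemma kind_sub k (G : group) H : subgroup_kind k G H -> subgroup G H.
Proof. destruct k; simpl; auto. intros [h _]; auto. Qed.

Section Main.
Variables (G Q : group) (T : G -> Prop) (pi : G -> Q).
Hypotheses (hT : normal_subgroup G T) (hpi : group_hom G Q pi)
  (hsurj : forall q : Q, exists g : G, pi g = q)
  (hker : forall g : G, pi g = gone Q <-> T g).

Lemma hTs : subgroup G T.
Proof. destruct hT; auto. Qed.

Lemma pi_one : pi e = e.
Proof.
  assert (h : pi e = pi e ** pi e) by (rewrite <- hpi; gsimpl; auto).
  transitivity (iv (pi e) ** (pi e ** pi e)).
  - rewrite (mulKV _ (pi e) (pi e)); auto.
  - rewrite <- h, gmulV; auto.
Qed.
Lemma pi_inv x : pi (iv x) = iv (pi x).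
Proof. apply inv_uniq. rewrite <- hpi, gmulV. apply pi_one. Qed.

Ltac pis := repeat (rewrite ?hpi, ?pi_inv, ?pi_one).

Definition pre (L : Q -> Prop) : G -> Prop := fun g => L (pi g).
Definition img (K : G -> Prop) : Q -> Prop := fun q => exists g, K g /\ pi g = q.
Definition HT (H : G -> Prop) : G -> Prop := fun x => exists t, T t /\ H (iv t ** x).
Definition lift (q : Q) : G := epsilon (inhabits e) (fun g => pi g = q).
Lemma lift_spec q : pi (lift q) = q.
Proof. unfold lift. apply (epsilon_spec (inhabits e) (fun g => pi g = q)); auto. Qed.

Lemma pre_kind k L : subgroup_kind k Q L -> subgroup_kind k G (pre L).
Proof.
  assert (hs : subgroup Q L -> subgroup G (pre L)).
  { intros hL; unfold pre; split; [|split]; intros; pis.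
    - apply sg1; auto. - apply sgM; auto. - apply sgV; auto. }
  destruct k; simpl; auto. intros [h1 h2]; split; auto.
  intros g x hx; unfold pre in *; pis. apply h2; auto.
Qed.

Lemma img_kind k K : subgroup_kind k G K -> subgroup_kind k Q (img K).
Proof.
  assert (hs : subgroup G K -> subgroup Q (img K)).
  { intros hK; unfold img; split; [|split].
    - exists e; split; [apply sg1; auto|apply pi_one].
    - intros x y [a [ha <-]] [b [hb <-]]. exists (a ** b); split; [apply sgM; auto|auto].
    - intros x [a [ha <-]]. exists (iv a); split; [apply sgV; auto|apply pi_inv]. }
  destruct k; simpl; auto. intros [h1 h2]; split; auto.
  intros q x [a [ha <-]]. exists (iv (lift q) ** (a ** lift q)); split; auto.
  pis. rewrite lift_spec; auto.
Qed.

Lemma HT_sub H : subgroup G H -> subgroup G (HT H).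
Proof.
  intro hH. destruct hT as [hTs' hTn]. unfold HT; split; [|split].
  - exists e; split; [apply sg1; auto|]. gsimpl; apply sg1; auto.
  - intros x y [t1 [ht1 h1]] [t2 [ht2 h2]].
    set (h := iv t1 ** x).
    exists (t1 ** (iv (iv h) ** (t2 ** iv h))); split.
    + apply sgM; auto.
    + apply (sg_eq G H (h ** (iv t2 ** y))); [unfold h; gsimpl; auto|]. apply sgM; auto.
  - intros x [t [ht h]]. set (hh := iv t ** x).
    exists (iv hh ** (iv t ** hh)); split.
    + apply hTn. apply sgV; auto.
    + apply (sg_eq G H (iv hh)); [unfold hh; gsimpl; auto|]. apply sgV; auto.
Qed.

Lemma HT_kind k H : subgroup_kind k G H -> subgroup_kind k G (HT H).
Proof.
  destruct k; simpl; [apply HT_sub|]. intros [h1 h2]; split; [apply HT_sub; auto|].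
  destruct hT as [_ hTn].
  intros g x [t [ht hx]]. exists (iv g ** (t ** g)); split; auto.
  apply (sg_eq G H (iv g ** ((iv t ** x) ** g))); [gsimpl; auto|]. apply h2; auto.
Qed.

Lemma H_HT H x : subgroup G H -> H x -> HT H x.
Proof. intros hH hx. exists e; split; [apply sg1, hTs|]. gsimpl; auto. Qed.
Lemma T_HT H x : subgroup G H -> T x -> HT H x.
Proof. intros hH hx. exists x; split; auto. gsimpl; apply sg1; auto. Qed.

Lemma img_pi K g : subgroup G K -> (forall x, T x -> K x) -> (img K (pi g) <-> K g).
Proof.
  intros hK hTK; split.
  - intros [a [ha he]]. apply (sg_eq G K (a ** (iv a ** g))); [gsimpl; auto|].
    apply sgM; auto. apply hTK, hker. pis. rewrite he. gsimpl; auto.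
  - intro h; exists g; auto.
Qed.

Lemma pre_img K : subgroup G K -> (forall x, T x -> K x) -> pre (img K) = K.
Proof. intros; apply pred_ext; intro x; unfold pre; apply img_pi; auto. Qed.

Lemma img_inj K1 K2 : subgroup G K1 -> (forall x, T x -> K1 x) -> subgroup G K2 -> (forall x, T x -> K2 x) ->
  img K1 = img K2 -> K1 = K2.
Proof. intros; rewrite <- (pre_img K1), <- (pre_img K2); auto; congruence. Qed.

Lemma pre_inj L1 L2 : pre L1 = pre L2 -> L1 = L2.
Proof.
  intro h. apply pred_ext; intro q. rewrite <- (lift_spec q).
  change (pre L1 (lift q) <-> pre L2 (lift q)). rewrite h; tauto.
Qed.

Lemma idx_pre L n : subgroup Q L -> has_index Q L n -> has_index G (pre L) n.
Proof.
  intros hL hi. assert (hL' : subgroup G (pre L)) by (apply (pre_kind Sub); auto).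
  apply has_index_reps in hi as [R [[h1 [_ [h3 h4]]] h5]]; auto.
  apply has_index_reps; auto. exists (map lift R); split; [|rewrite length_map; auto].
  split; [|split; [|split]].
  - apply NoDup_map_inj_in; auto. intros a b _ _ hab. rewrite <- (lift_spec a), <- (lift_spec b), hab; auto.
  - auto.
  - intros x _. destruct (h3 (pi x) I) as [a [ha hx]]. exists (lift a); split; [apply in_map; auto|].
    unfold pre; pis; rewrite lift_spec; auto.
  - intros a b ha hb hab. apply in_map_iff in ha as [a' [<- ha]]. apply in_map_iff in hb as [b' [<- hb]].
    f_equal. apply h4; auto. unfold pre in hab; revert hab; pis; rewrite !lift_spec; auto.
Qed.

Lemma idx_img K n : subgroup G K -> (forall x, T x -> K x) -> has_index G K n -> has_index Q (img K) n.
Proof.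
  intros hK hTK hi. assert (hK' : subgroup Q (img K)) by (apply (img_kind Sub); auto).
  apply has_index_reps in hi as [R [[h1 [_ [h3 h4]]] h5]]; auto.
  apply has_index_reps; auto. exists (map pi R); split; [|rewrite length_map; auto].
  split; [|split; [|split]].
  - apply NoDup_map_inj_in; auto. intros a b ha hb hab. apply h4; auto.
    apply img_pi; auto. pis. rewrite hab. gsimpl. apply sg1; auto.
  - auto.
  - intros q _. rewrite <- (lift_spec q). destruct (h3 (lift q) I) as [a [ha hx]].
    exists (pi a); split; [apply in_map; auto|]. rewrite <- pi_inv, <- hpi. apply img_pi; auto.
  - intros a b ha hb hab. apply in_map_iff in ha as [a' [<- ha]]. apply in_map_iff in hb as [b' [<- hb]].
    f_equal. apply h4; auto. apply img_pi; auto. pis; auto.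
Qed.

Lemma idx_HT H n : subgroup G H -> has_index G H n ->
  exists m, (1 <= m <= n)%nat /\ has_index G (HT H) m.
Proof.
  intros hH hi. apply has_index_reps in hi as [R [[h1 [_ [h3 h4]]] h5]]; auto.
  destruct (reps_exists G (fun _ => True) (HT H) R) as [S [hS [hl _]]]; auto.
  - apply HT_sub; auto.
  - intros x _. destruct (h3 x I) as [a [? ?]]. exists a; split; auto. apply H_HT; auto.
  - exists (length S); split.
    + split; [|lia]. destruct hS as [_ [_ [hc _]]]. destruct (hc e I) as [a [ha _]].
      destruct S; [contradiction|simpl; lia].
    + apply has_index_reps; [apply HT_sub; auto|]. eauto.
Qed.

End Main.


Lemma disj_index (G : group) k i j H : subgroup_kind k G H /\ has_index G H i ->
  subgroup_kind k G H /\ has_index G H j -> i = j.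
Proof.
  intros [hk hi] [_ hj]. apply kind_sub in hk.
  apply has_index_reps in hi as [R1 [h1 <-]]; auto. apply has_index_reps in hj as [R2 [h2 <-]]; auto.
  eapply reps_length; eauto.
Qed.

Lemma sgTrue (G : group) : subgroup G (fun _ => True).
Proof. split; auto. Qed.

Section Final.
Variables (G Q : group) (T : G -> Prop) (pi : G -> Q).
Hypotheses (hT : normal_subgroup G T) (hpi : group_hom G Q pi)
  (hsurj : forall q : Q, exists g : G, pi g = q)
  (hker : forall g : G, pi g = gone Q <-> T g).
Variable r : nat.
Hypothesis hr : forall H, subgroup G H -> finitely_generated G H ->
          exists l, (length l <= r)%nat /\ gen_by_list G H l.
Variables (Tl : list G) (t : nat).
Hypotheses (hTl1 : NoDup Tl) (hTl2 : length Tl = t) (hTl3 : forall x, T x <-> In x Tl).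

Definition SubP (X : group) k n := fun H : X -> Prop => subgroup_kind k X H /\ has_index X H n.

Lemma SubG_bounded k n : bounded (SubP G k n) (2 ^ (S r * (S n * S n))).
Proof.
  intros l hn hl.
  set (rho := fun H => epsilon (inhabits nil) (fun R => reps G (fun _ => True) H R /\ length R = n)).
  apply (lemA G r hr (fun _ => True) (sgTrue G) n rho l hn).
  intros H hH. destruct (hl H hH) as [hk hi]. apply kind_sub in hk.
  apply has_index_reps in hi; auto.
  pose proof (epsilon_spec (inhabits nil) _ hi) as [[h1 [h2 [h3 h4]]] h5]. fold (rho H) in h1, h2, h3, h4, h5.
  split; [exact hk|]. repeat split; auto.
Qed.

Lemma SubQ_bounded k n : bounded (SubP Q k n) (2 ^ (S r * (S n * S n))).
Proof.
  apply bounded_inj with (P' := SubP G k n) (f := pre G Q pi); [apply SubG_bounded| |].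
  - intros L [hk hi]. split; [apply (pre_kind G Q pi hpi); auto|]. apply (idx_pre G Q pi hpi hsurj); auto. apply kind_sub with k; auto.
  - intros; apply (pre_inj G Q pi hsurj); auto.
Qed.

Lemma cardG k n : has_card (SubP G k n) (a_count k G n).
Proof.
  destruct (bounded_card _ _ (SubG_bounded k n)) as [m [hm _]].
  unfold a_count. rewrite (card_of_spec _ m); auto.
Qed.
Lemma cardQ k n : has_card (SubP Q k n) (a_count k Q n).
Proof.
  destruct (bounded_card _ _ (SubQ_bounded k n)) as [m [hm _]].
  unfold a_count. rewrite (card_of_spec _ m); auto.
Qed.

Definition Bnd := (2 ^ (S r * (S t * S t)))%nat.

Lemma partial_le k N : (partial_count k Q N <= partial_count k G N)%nat /\
   (partial_count k G N <= Bnd * partial_count k Q N)%nat.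
Proof.
  destruct (union_list (SubP G k) (a_count k G) (seq 1 N)) as [LG [g1 [g2 g3]]].
  { apply seq_NoDup. } { intros; apply cardG. } { intros; eapply disj_index; eauto. }
  destruct (union_list (SubP Q k) (a_count k Q) (seq 1 N)) as [LQ [q1 [q2 q3]]].
  { apply seq_NoDup. } { intros; apply cardQ. } { intros; eapply disj_index; eauto. }
  unfold partial_count. rewrite <- g2, <- q2. split.
  - rewrite <- (length_map (pre G Q pi) LQ). apply NoDup_incl_length.
    + apply NoDup_map_inj_in; auto. intros; apply (pre_inj G Q pi hsurj); auto.
    + intros H hH. apply in_map_iff in hH as [L [<- hL]]. apply g3.
      apply q3 in hL as [i [hi [hk hx]]]. exists i; split; auto. split; [apply pre_kind; auto|].
      apply idx_pre; auto. apply kind_sub with k; auto.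
  - apply fiber_count with (f := fun H => img G Q pi (HT G T H)); auto.
    + intros H hH. apply g3 in hH as [i [hi [hk hx]]]. apply q3.
      assert (hs := kind_sub _ _ _ hk).
      destruct (idx_HT G T hT H i hs hx) as [m [hm hmi]].
      exists m; split; [apply in_seq in hi; apply in_seq; lia|]. split.
      * apply (img_kind G Q pi hpi hsurj). apply (HT_kind G T hT); auto.
      * apply (idx_img G Q T pi hpi hsurj hker); auto. apply (HT_sub G T hT); auto. intros; apply T_HT; auto.
    + intros y l' hn hl'. destruct l' as [|H0 l0]; [simpl; lia|].
      set (K := HT G T H0).
      assert (hsub : forall H, In H (H0 :: l0) -> subgroup G H).
      { intros H hH. destruct (hl' H hH) as [hH' _]. apply g3 in hH' as [i [_ [hk _]]].
        apply kind_sub with k; auto. }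
      assert (hK : subgroup G K) by (apply (HT_sub G T hT); auto; apply hsub; simpl; auto).
      apply (lemA G r hr K hK t (fun _ => Tl)); auto.
      intros H hH. assert (hs := hsub H hH).
      assert (hKH : HT G T H = K).
      { apply (img_inj G Q T pi hpi hker); auto.
        - apply (HT_sub G T hT); auto.
        - intros; apply T_HT; auto.
        - intros; apply T_HT; auto. apply hsub; simpl; auto.
        - destruct (hl' H hH) as [_ e1]. destruct (hl' H0 (or_introl eq_refl)) as [_ e2]. unfold K; rewrite e1, e2; auto. }
      rewrite <- hKH. split; auto. split; [intros; apply (H_HT G T hT); auto|]. split; [|split; auto].
      * intros x [tt [htt hx]]. exists tt; split; auto. apply hTl3; auto.
      * intros a ha. apply T_HT; auto. apply hTl3; auto.
Qed.

End Final.


Section Key.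
Variables (G : group) (T : G -> Prop).
Hypothesis hT : normal_subgroup G T.
Variables (Tl : list G) (t : nat).
Hypotheses (hTl1 : NoDup Tl) (hTl2 : length Tl = t) (hTl3 : forall x, T x <-> In x Tl).

Lemma key_T H n p e' : subgroup G H -> has_index G H n -> n = (p ^ e')%nat ->
  prime (Z.of_nat p) -> ~ Nat.divide p t -> forall x, T x -> H x.
Proof.
  intros hH hi hn hp hpt.
  assert (hTs : subgroup G T) by (destruct hT; auto).
  set (K := HT G T H).
  assert (hK : subgroup G K) by (apply (HT_sub G T hT); auto).
  apply has_index_reps in hi as [R [hR hRl]]; auto.
  destruct hR as [r1 [r2 [r3 r4]]].
  destruct (reps_exists G (fun _ => True) K R hK) as [S [hS _]]; auto.
  { intros x _. destruct (r3 x I) as [a [? ?]]. exists a; split; auto. apply (H_HT G T hT); auto. }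
  destruct (reps_exists G K H Tl hH) as [U [hU [_ hUT]]].
  { intros x [tt [htt hx]]. exists tt; split; auto. apply hTl3; auto. }
  { intros a ha. apply T_HT; auto. apply hTl3; auto. }
  assert (hSU := reps_mul G (fun _ => True) K H S U (sgTrue G) hK hH
     (fun x hx => H_HT G T hT H x hH hx) (fun _ _ => I) hS hU).
  assert (e1 : n = (length S * length U)%nat).
  { rewrite <- hRl, <- reps_mul_length. apply (reps_length G (fun _ => True) H); auto.
    repeat split; auto. }
  set (D := fun x => T x /\ H x).
  assert (hD : subgroup G D).
  { split; [|split]; unfold D.
    - split; apply sg1; auto.
    - intros x y [? ?] [? ?]; split; apply sgM; auto.
    - intros x [? ?]; split; apply sgV; auto. }
  set (One := fun x : G => x = e).
  assert (hOne : subgroup G One).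
  { unfold One; split; [|split]; auto.
    - intros x y -> ->; gsimpl; auto.
    - intros x ->; gsimpl; auto. }
  destruct hU as [u1 [u2 [u3 u4]]].
  assert (hUD : reps G T D U).
  { split; [auto|split; [|split]].
    - intros a ha; apply hTl3, hUT, ha.
    - intros x hx. destruct (u3 x (T_HT G T H x hH hx)) as [a [ha hax]]. exists a; split; auto.
      split; auto. apply sgM; auto. apply sgV; auto. apply hTl3, hUT, ha.
    - intros a b ha hb [_ hab]. apply u4; auto. }
  set (Dl := filter (fun x => if excluded_middle_informative (H x) then true else false) Tl).
  destruct (reps_exists G D One Dl hOne) as [V [hV _]].
  { intros x [hx1 hx2]. exists x; split.
    - apply filter_In; split; [apply hTl3; auto|]. destruct excluded_middle_informative; tauto.
    - unfold One; gsimpl; auto. }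
  { intros a ha. apply filter_In in ha as [ha1 ha2]. split; [apply hTl3; auto|].
    destruct excluded_middle_informative; auto; discriminate. }
  assert (hUV := reps_mul G T D One U V hTs hD hOne (fun x hx => ltac:(unfold One in hx; subst; apply sg1; auto))
     (fun x hx => proj1 hx) hUD hV).
  assert (hTOne : reps G T One Tl).
  { split; [auto|split; [|split]].
    - intros a ha; apply hTl3; auto.
    - intros x hx. exists x; split; [apply hTl3; auto|]. unfold One; gsimpl; auto.
    - intros a b _ _ hab. unfold One in hab. rewrite <- (mulK G a b), hab, mulr1; auto. }
  assert (e2 : t = (length U * length V)%nat).
  { rewrite <- hTl2, <- reps_mul_length. apply (reps_length G T One); auto. }
  assert (ho : length U = 1%nat).
  { apply (coprime_one p t (length U) e'); auto.
    - exists (length S). lia.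
    - exists (length V). lia. }
  destruct U as [|u [|u' U']]; simpl in ho; try discriminate.
  assert (hu : H u).
  { destruct (u3 e (sg1 G K hK)) as [a [[<-|[]] ha]]. apply sgV' ; auto. revert ha; gsimpl; auto. }
  intros x hx. destruct (u3 x (T_HT G T H x hH hx)) as [a [[<-|[]] ha]].
  apply (sg_eq G H (u ** (iv u ** x))); [gsimpl; auto|]. apply sgM; auto.
Qed.
End Key.

Theorem lemma5p2 (G : group) (T : G -> Prop) (Q : group) (pi : G -> Q)
  (hrank : finite_rank G)
  (hT : normal_subgroup G T)
  (hTfin : exists m, has_card T m)
  (hpi : group_hom G Q pi)
  (hsurj : forall q : Q, exists g : G, pi g = q)
  (hker : forall g : G, pi g = gone Q <-> T g) :
  (forall k : kind, alpha k G = alpha k Q) /\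
  (forall (p : nat), prime (Z.of_nat p) ->
     (forall m, has_card T m -> ~ Nat.divide p m) ->
     forall k : kind, local_zeta k G p = local_zeta k Q p).
Proof.
  destruct hrank as [r hr]. destruct hTfin as [t htc].
  pose proof htc as [Tl [h1 [h2 h3]]].
  split.
  - intro k. unfold alpha. f_equal. apply pred_ext. intro a. split; intros [c [hc hb]].
    + exists c; split; auto. intros n hn. eapply Rle_trans; [|apply hb; auto].
      apply le_INR. apply (partial_le G Q T pi hT hpi hsurj hker r hr Tl t h2 h3).
    + exists (INR (Bnd r t) * c)%R; split.
      * apply Rmult_lt_0_compat; auto. apply lt_0_INR. unfold Bnd.
        apply Nat.neq_0_lt_0, Nat.pow_nonzero; lia.
      * intros n hn. eapply Rle_trans.
        -- apply le_INR. apply (partial_le G Q T pi hT hpi hsurj hker r hr Tl t h2 h3).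
        -- rewrite mult_INR, Rmult_assoc. apply Rmult_le_compat_l; [apply pos_INR|apply hb; auto].
  - intros p hp hnd k. apply functional_extensionality; intro e'. unfold local_zeta.
    pose proof (cardG G r hr k (p ^ e')) as cG.
    pose proof (cardQ G Q pi hpi hsurj r hr k (p ^ e')) as cQ.
    apply Nat.le_antisymm.
    + apply (card_le_inj _ _ (img G Q pi) _ _ cG cQ).
      * intros H [hk hi]. assert (hs := kind_sub _ _ _ hk).
        assert (hTH := key_T G T hT Tl t h1 h2 h3 H _ p e' hs hi eq_refl hp (hnd t htc)).
        split; [apply (img_kind G Q pi hpi hsurj); auto|].
        apply (idx_img G Q T pi hpi hsurj hker); auto.
      * intros H1 H2 [hk1 hi1] [hk2 hi2] he.
        assert (hs1 := kind_sub _ _ _ hk1). assert (hs2 := kind_sub _ _ _ hk2).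
        apply (img_inj G Q T pi hpi hker); auto.
        -- apply (key_T G T hT Tl t h1 h2 h3 H1 _ p e' hs1 hi1 eq_refl hp (hnd t htc)).
        -- apply (key_T G T hT Tl t h1 h2 h3 H2 _ p e' hs2 hi2 eq_refl hp (hnd t htc)).
    + apply (card_le_inj _ _ (pre G Q pi) _ _ cQ cG).
      * intros L [hk hi]. split; [apply (pre_kind G Q pi hpi); auto|].
        apply (idx_pre G Q pi hpi hsurj); auto. apply kind_sub with k; auto.
      * intros; apply (pre_inj G Q pi hsurj); auto.
Qed.
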